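(* Let $l\ge2$ and $a,b\in\mathbb{Z}_{2l}$ be such that $X=X(\mathbb{Z}_{2l},\{\pm a,\pm b\})$ is a $4$-regular circulant graph, and assume $a+b=l$ with $l\not\equiv0\pmod 4$. (i) If $l\equiv2\pmod4$, then $X$ admits perfect state transfer from $d^*e_x$ to $d^*e_{x+l}$ at time $l$, for every $x\in\mathbb{Z}_{2l}$. (ii) If $l$ is odd, then $X$ admits perfect state transfer from $d^*e_x$ to $d^*e_{x+l}$ at time $2l$, for every $x\in\mathbb{Z}_{2l}$. Moreover, if $X$ is connected, then these times are the minimum times at which perfect state transfer from $d^*e_x$ to $d^*e_{x+l}$ occurs.
   Context: For $S\subseteq\mathbb{Z}_n\setminus\{0\}$ with $S=-S$, $X(\mathbb{Z}_n,S)$ has vertex set $\mathbb{Z}_n$ and edges $\{x,y\}$ with $y-x\in S$. For a graph with symmetric arc set $\mathcal{A}$ ($t((x,y))=y$, $(x,y)^{-1}=(y,x)$): boundary matrix $d_{x,a}=\frac{1}{\sqrt{\deg x}}\delta_{x,t(a)}$, shift matrix $R_{a,b}=\delta_{a,b^{-1}}$, $U=R(2d^*d-I_{\mathcal{A}})$; $e_x$ is the standard unit vector. Perfect state transfer from $\Phi$ to a distinct state $\Psi$ at time $\tau\in\mathbb{Z}_{\ge1}$ means $U^\tau\Phi=\gamma\Psi$ for some $|\gamma|=1$. *)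

(* Defs.v *)
From HB Require Import structures.
From mathcomp Require Import all_boot all_order all_algebra all_field.
Set Implicit Arguments. Unset Strict Implicit. Unset Printing Implicit Defensive.
Import Order.TTheory GRing.Theory Num.Theory.
Local Open Scope ring_scope.

Definition conn_set (n : nat) (a b : 'Z_n) : {set 'Z_n} := [set a; -a; b; -b].

Definition arc (n : nat) (S : {set 'Z_n}) : finType :=
  {p : 'Z_n * 'Z_n | p.2 - p.1 \in S}.

Section Walk.
Variables (n : nat) (S : {set 'Z_n}).

Definition tgt (e : arc S) : 'Z_n := (val e).2.

Definition deg (x : 'Z_n) : nat := #|[set e : arc S | tgt e == x]|.

Definition dmat (x : 'Z_n) (e : arc S) : algC :=
  (sqrtC (deg x)%:R)^-1 * (x == tgt e)%:R.

Definition Rmat (e f : arc S) : algC :=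
  (val e == ((val f).2, (val f).1))%:R.

(* U = R (2 d^* d - I) *)
Definition Umat (e f : arc S) : algC :=
  \sum_(g : arc S) Rmat e g *
     (2 * (\sum_(x : 'Z_n) (dmat x g)^* * dmat x f) - (g == f)%:R).

Definition Uact (v : {ffun arc S -> algC}) : {ffun arc S -> algC} :=
  [ffun e => \sum_(f : arc S) Umat e f * v f].

Definition dstar_e (x : 'Z_n) : {ffun arc S -> algC} :=
  [ffun e => (dmat x e)^*].

Definition PST (Phi Psi : {ffun arc S -> algC}) (tau : nat) : Prop :=
  Phi <> Psi /\ (1 <= tau)%N /\
  exists gamma : algC, `|gamma| = 1 /\ iter tau Uact Phi = [ffun e => gamma * Psi e].

Definition circ_connected : Prop :=
  forall x y : 'Z_n, connect (fun u v : 'Z_n => v - u \in S) x y.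

End Walk.

(* Main.v *)
Require Import Defs.
From HB Require Import structures.
From mathcomp Require Import all_boot all_order all_algebra all_field.
From mathcomp Require Import ring zify.
Import Order.TTheory GRing.Theory Num.Theory.
Local Open Scope ring_scope.

Section Gen.
Variables (n : nat) (S : {set 'Z_n}).
Hypothesis symS : forall s, s \in S -> - s \in S.

Definition src (e : Defs.arc S) : 'Z_n := (val e).1.

Definition st (phi : 'Z_n -> 'Z_n -> algC) : {ffun Defs.arc S -> algC} :=
  [ffun e => phi (val e).1 (val e).2].

Lemma st_ext phi psi : (forall u w, w - u \in S -> phi u w = psi u w) ->
  st phi = st psi.
Proof. by move=> H; apply/ffunP => e; rewrite !ffunE; apply: H; exact: (valP e). Qed.

Lemma sum_delta (I : finType) (i0 : I) (F : I -> algC) :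
  \sum_i (i == i0)%:R * F i = F i0.
Proof.
rewrite (bigD1 i0) //= eqxx mul1r big1 ?addr0 // => i /negbTE ->.
by rewrite mul0r.
Qed.

Lemma sum_tgt (F : Defs.arc S -> algC) (z : 'Z_n) (e0 : Defs.arc S) :
  \sum_(f | tgt f == z) F f = \sum_(s in S) F (insubd e0 (z - s, z)).
Proof.
rewrite (reindex_onto (fun s => insubd e0 (z - s, z)) (fun f => tgt f - src f)).
  apply: eq_bigl => s.
  have subK : z - (z - s) = s by rewrite opprB addrC subrK.
  rewrite /tgt /src val_insubd /= subK.
  case: ifP => hs /=.
    by rewrite eqxx /= subK eqxx.
  apply/negbTE/nandP; right; apply/negP => /eqP Es.
  by move: hs; rewrite -Es (valP e0).
move=> f /eqP hf; apply: val_inj; rewrite val_insubd /=.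
have subK : forall p q : 'Z_n, q - (q - p) = p by move=> p q; rewrite opprB addrC subrK.
rewrite /src -hf /tgt !subK.
case: ifP => [_|/negbT/negP[]]; last exact: (valP f).
by case: f {hf} => [[]].
Qed.

Lemma sum_tgt_st (phi : 'Z_n -> 'Z_n -> algC) (z : 'Z_n) (e0 : Defs.arc S) :
  \sum_(f : Defs.arc S | tgt f == z) phi (val f).1 (val f).2 = \sum_(s in S) phi (z - s) z.
Proof.
rewrite (sum_tgt (fun f => phi (val f).1 (val f).2) z e0).
apply: eq_bigr => s hs; rewrite val_insubd /=.
have subK : forall p q : 'Z_n, q - (q - p) = p by move=> p q; rewrite opprB addrC subrK.
by rewrite subK hs.
Qed.

Lemma deg_card (z : 'Z_n) (e0 : Defs.arc S) : deg S z = #|S|.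
Proof.
apply/eqP; rewrite -(eqr_nat algC) /deg -sumr_const.
rewrite -[X in _ == X]sumr_const.
apply/eqP.
rewrite (eq_bigl (fun f => tgt f == z)); last by move=> f; rewrite inE.
by rewrite (sum_tgt (fun _ => 1) z e0).
Qed.


Hypothesis deg4 : forall x, deg S x = 4%N.

Lemma dmatE (x : 'Z_n) (g : Defs.arc S) : dmat x g = 2^-1 * (x == tgt g)%:R.
Proof.
rewrite /dmat deg4.
have -> : (4%:R : algC) = 2 ^+ 2 by rewrite -natrX.
by rewrite sqrCK // ler0n.
Qed.

Lemma conj_dmat (x : 'Z_n) (g : Defs.arc S) : (dmat x g)^* = dmat x g.
Proof. by rewrite dmatE rmorphM fmorphV /= !conjC_nat. Qed.

Lemma dd (g f : Defs.arc S) : \sum_x (dmat x g)^* * dmat x f = 4^-1 * (tgt g == tgt f)%:R.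
Proof.
under eq_bigr do rewrite conj_dmat !dmatE.
rewrite (bigD1 (tgt g)) //= big1 ?addr0; last first.
  by move=> i /negbTE ->; rewrite mulr0 mul0r.
by rewrite eqxx mulr1 mulrA -invfM -natrM.
Qed.

Definition rev (e : Defs.arc S) : Defs.arc S := insubd e (tgt e, src e).

Lemma val_rev (e : Defs.arc S) : val (rev e) = (tgt e, src e).
Proof.
rewrite val_insubd /=.
have -> : src e - tgt e = - (tgt e - src e) by rewrite opprB.
by rewrite symS //; exact: (valP e).
Qed.

Lemma RmatE (e g : Defs.arc S) : Rmat e g = (g == rev e)%:R.
Proof.
rewrite /Rmat; congr (nat_of_bool _)%:R.
rewrite -val_eqE val_rev /tgt /src.
case: (val e) => e1 e2; case: (val g) => g1 g2 /=.
by apply/idP/idP => /eqP [-> ->].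
Qed.

Lemma UmatE (e f : Defs.arc S) : Umat e f = 2^-1 * (tgt f == src e)%:R - (f == rev e)%:R.
Proof.
rewrite /Umat.
under eq_bigr do rewrite RmatE dd.
rewrite sum_delta eq_sym.
have -> : tgt (rev e) = src e by rewrite /tgt val_rev.
rewrite eq_sym mulrA; congr (_ * _ - _).
rewrite (_ : 4%:R = 2 * 2 :> algC); last by rewrite -natrM.
rewrite invfM mulrA divff ?mul1r ?pnatr_eq0 //. by congr (nat_of_bool _)%:R; apply: eq_sym.
Qed.

Lemma Uact_st phi :
  Uact (st phi) = st (fun u w => 2^-1 * (\sum_(s in S) phi (u - s) u) - phi w u).
Proof.
apply/ffunP => e; rewrite !ffunE.
under eq_bigr do rewrite UmatE ffunE mulrBl.
rewrite sumrB.
rewrite (@sum_delta _ (rev e) (fun f : Defs.arc S => phi (val f).1 (val f).2)) val_rev /=.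
congr (_ - _).
rewrite -(sum_tgt_st phi _ e) mulr_sumr [RHS]big_mkcond /=.
apply: eq_bigr => f _; rewrite -mulrA.
by case: (tgt f == src e); rewrite ?mulr1 ?mul1r ?mul0r ?mulr0.
Qed.

Lemma dstar_st (x : 'Z_n) : dstar_e S x = st (fun u w => 2^-1 * (w == x)%:R).
Proof.
by apply/ffunP => e; rewrite !ffunE conj_dmat dmatE eq_sym.
Qed.

End Gen.

Lemma card4 (T : finType) (a b c d : T) : #|[set a; b; c; d]| = 4%N ->
  (a != b) && (a != c) && (a != d) && (b != c) && (b != d) && (c != d).
Proof.
rewrite -setUA -setUA.
rewrite !cardsU1 cards1 !inE !negb_or.
by case: (a != b); case: (a != c); case: (a != d); case: (b != c); case: (b != d); case: (c != d).
Qed.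
Lemma sum4 (T : finType) (a b c d : T) (F : T -> algC) : #|[set a; b; c; d]| = 4%N ->
  \sum_(s in [set a; b; c; d]) F s = F a + F b + F c + F d.
Proof.
move=> h; have := @card4 _ _ _ _ _ h.
move=> /andP[/andP[/andP[/andP[/andP[ab ac] ad] bc] bd] cd].
rewrite -setUA -setUA !big_setU1 ?big_set1 ?addrA //= ?inE ?negb_or ?ab ?ac ?ad ?bc ?bd ?cd //.
by rewrite !addrA.
Qed.

Definition mkarc (n : nat) (S : {set 'Z_n}) (u w : 'Z_n) (H : w - u \in S) : Defs.arc S :=
  exist (fun p : 'Z_n * 'Z_n => p.2 - p.1 \in S) (u, w) H.


Section Spec.
Variables (l : nat) (a b : 'Z_(2 * l)).
Hypotheses (hl : (2 <= l)%N) (hc : #|conn_set a b| = 4%N) (hab : a + b = l%:R).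

Local Notation Z := ('Z_(2 * l)).
Local Notation L := (l%:R : 'Z_(2 * l)).
Local Notation S := (conn_set a b).
Local Notation A := (a *+ 2).

Lemma p_gt1 : (1 < 2 * l)%N.
Proof. lia. Qed.

Lemma L2 : L + L = 0.
Proof. by rewrite -natrD addnn -mul2n pchar_Zp // p_gt1. Qed.

Lemma oppL : - L = L.
Proof. by apply/eqP; rewrite eq_sym -addr_eq0 L2. Qed.

Lemma mul2l (y : Z) : y *+ (2 * l) = 0.
Proof. by rewrite -mulr_natr pchar_Zp ?mulr0 // p_gt1. Qed.

Lemma valL : nat_of_ord L = l.
Proof. by rewrite val_Zp_nat ?p_gt1 // modn_small //; lia. Qed.

Lemma Lneq0 : L != 0.
Proof. by apply/eqP => h; have := valL; rewrite h /=; lia. Qed.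

Lemma ordlt (y : Z) : (nat_of_ord y < 2 * l)%N.
Proof. by case: y => v hv /=; rewrite Zp_cast ?p_gt1 in hv. Qed.

Lemma F3 (y : Z) : (y *+ 2 == 0) = (y == 0) || (y == L).
Proof.
apply/idP/idP; last first.
  by case/orP => /eqP ->; [rewrite mul0rn | rewrite mulr2n L2].
move=> /eqP h.
have hy : y = (nat_of_ord y)%:R by rewrite natr_Zp.
move: h; rewrite hy mulr2n -natrD => h.
have := congr1 (@nat_of_ord _) h; rewrite val_Zp_nat ?p_gt1 //= => hm.
have hd : (2 * l %| 2 * y)%N by rewrite /dvdn mul2n -addnn hm.
rewrite dvdn_pmul2l // in hd.
case/dvdnP: hd => k hk.
have := ordlt y => hlt.
have [k0|k1] : (k = 0 \/ k = 1)%N by nia.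
  by rewrite hk k0 mul0n eqxx.
by rewrite hk k1 mul1n eqxx orbT.
Qed.

Lemma distinct :
  (a != - a) && (a != b) && (a != - b) && (- a != b) && (- a != - b) && (b != - b).
Proof. exact: (@card4 _ _ _ _ _ hc). Qed.

Lemma hb : b = L - a.
Proof. by rewrite -hab [a + b]addrC addrK. Qed.

Lemma An : (A == - A) = false.
Proof.
have := distinct => /andP[/andP[/andP[/andP[/andP[d1 d2] d3] d4] d5] d6].
apply/negbTE/negP => /eqP h.
have : (A *+ 2 == 0) by rewrite mulr2n {1}h addNr.
rewrite F3 => /orP[|].
  by rewrite mulr2n addr_eq0 (negbTE d1).
rewrite mulr2n => /eqP h2.
move: d2; rewrite hb -h2 addrK.
by rewrite eqxx.
Qed.

Lemma nAn : (- A == A) = false.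
Proof. by rewrite eq_sym An. Qed.

Lemma Ab : b *+ 2 = - A.
Proof. by rewrite hb mulrnBl mulr2n L2 sub0r. Qed.

Lemma Anb : (- b) *+ 2 = A.
Proof. by rewrite mulNrn Ab opprK. Qed.

Lemma inS (s : Z) : (s \in S) = [|| s == a, s == - a, s == b | s == - b].
Proof. by rewrite /conn_set !inE !orbA. Qed.

Lemma dirS (s : Z) : s \in S -> s *+ 2 = A \/ s *+ 2 = - A.
Proof.
rewrite inS => /or4P[] /eqP ->; rewrite ?mulNrn ?Ab ?opprK; by [left|right].
Qed.

Lemma symS (s : Z) : s \in S -> - s \in S.
Proof.
rewrite !inS => /or4P[] /eqP ->; rewrite ?opprK eqxx ?orbT //.
Qed.

Lemma aS : a \in S.
Proof. by rewrite inS eqxx. Qed.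

Lemma subK (p q : Z) : q - (q - p) = p.
Proof. by rewrite opprB addrC subrK. Qed.

Lemma deg4 (z : Z) : deg S z = 4%N.
Proof.
have H : z - (z - a) \in S by rewrite subK aS.
by rewrite (@deg_card _ _ z (@mkarc _ _ _ _ H)) hc.
Qed.

Lemma sumS (F : Z -> algC) : \sum_(s in S) F s = F a + F (- a) + F b + F (- b).
Proof. exact: (@sum4 _ _ _ _ _ F hc). Qed.



Definition Dm (x C : Z) (t : nat) (u w : Z) : algC :=
  4^-1 * ((((w - u) *+ 2 == C) && ((w - x) *+ 2 == C *+ t)) : nat)%:R.
Definition Em (x : Z) (u w : Z) : algC := 4^-1 * ((w == x)%:R - (w == x + L)%:R).
Definition Fm (x : Z) (u w : Z) : algC := 4^-1 * ((u == x)%:R - (u == x + L)%:R).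
Definition Gm (x : Z) (t : nat) (u w : Z) : algC := if odd t then Fm x u w else Em x u w.
Definition Psi (x : Z) (t : nat) (u w : Z) : algC :=
  Dm x A t u w + Dm x (- A) t u w + (-1) ^+ (t./2) * Gm x t u w.
Definition step (phi : Z -> Z -> algC) (u w : Z) : algC :=
  2^-1 * (phi (u - a) u + phi (u - - a) u + phi (u - b) u + phi (u - - b) u) - phi w u.

Lemma step_lin (f g h : Z -> Z -> algC) (k : algC) u w :
  step (fun u w => f u w + g u w + k * h u w) u w = step f u w + step g u w + k * step h u w.
Proof. rewrite /step; ring. Qed.

Lemma stepD x C t u w : (C = A \/ C = - A) -> w - u \in S ->
  step (Dm x C t) u w = Dm x C t.+1 u w.
Proof.
move=> hC huw.
have e2 : (w - x) *+ 2 = (w - u) *+ 2 + (u - x) *+ 2 by rewrite -mulrnDl addrA subrK.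
have e3 : (u - w) *+ 2 = - ((w - u) *+ 2) by rewrite -mulNrn opprB.
rewrite /step /Dm !subK e2 e3 (mulrS C t) (mulNrn a 2) Ab Anb.
case: (dirS _ huw); move: ((u - x) *+ 2) => y => ->; case: hC => ->;
  rewrite ?opprK ?eqxx ?An ?nAn /= ?(inj_eq (addrI _)).
all: by case: (y == _) => /=; field.
Qed.

Lemma stepE x u w : step (Em x) u w = Fm x u w.
Proof. by rewrite /step /Em /Fm; field. Qed.

Lemma shiftL x (y s : Z) : (y - s == x + L) = (y - (s + L) == x).
Proof. by rewrite opprD addrA [RHS]subr_eq. Qed.

Lemma aL : a + L = - b. Proof. by rewrite hb opprB oppL. Qed.
Lemma naL : - a + L = b. Proof. by rewrite hb addrC. Qed.
Lemma bL : b + L = - a. Proof. by rewrite hb addrC addrA L2 sub0r. Qed.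
Lemma nbL : - b + L = a. Proof. by rewrite hb opprB subrK. Qed.

Lemma stepF x u w : step (Fm x) u w = - Em x u w.
Proof.
by rewrite /step /Fm /Em !shiftL aL naL bL nbL; field.
Qed.

Lemma stepG x t u w : step (Gm x t) u w = if odd t then - Em x u w else Fm x u w.
Proof. by rewrite /Gm; case: (odd t); [apply: stepF | apply: stepE]. Qed.

Lemma stepPsi x t u w : w - u \in S -> step (Psi x t) u w = Psi x t.+1 u w.
Proof.
move=> huw.
rewrite /Psi step_lin !stepD //; [|by right|by left].
rewrite stepG /Gm /=.
rewrite uphalf_half.
case: (odd t) => /=; rewrite ?add0n ?exprS; ring.
Qed.


Lemma xL (x : Z) : (x == x + L) = false.
Proof. by rewrite -{1}(addr0 x) (inj_eq (addrI x)) eq_sym (negbTE Lneq0). Qed.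

Lemma F3' (x w : Z) : ((w - x) *+ 2 == 0) = (w == x) || (w == x + L).
Proof. by rewrite F3 subr_eq0 subr_eq (addrC L x). Qed.

Lemma Psi0 x u w : w - u \in S -> Psi x 0 u w = 2^-1 * (w == x)%:R.
Proof.
move=> huw; rewrite /Psi /Gm /Dm /Em /= !mulr0n expr0 mul1r F3'.
case: (dirS _ huw) => ->; rewrite ?eqxx ?An ?nAn /=;
case: (w =P x) => [->|_] /=; rewrite ?xL /=; case: (w == x + L); by field.
Qed.

Lemma PsiFinal x t u w : ~~ odd t -> odd (t./2) -> A *+ t = 0 -> w - u \in S ->
  Psi x t u w = 2^-1 * (w == x + L)%:R.
Proof.
move=> ho hs hA huw.
rewrite /Psi /Gm /Dm /Em (negbTE ho) -signr_odd hs expr1 (mulNrn (a *+ 2) t) hA oppr0 F3'.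
case: (dirS _ huw) => ->; rewrite ?eqxx ?An ?nAn /=;
case: (w =P x) => [->|_] /=; rewrite ?xL /=; case: (w == x + L); by field.
Qed.

Lemma iterPsi x t : iter t (@Uact _ S) (dstar_e S x) = st _ S (Psi x t).
Proof.
elim: t => [|t IH].
  rewrite /= (@dstar_st _ _ deg4); apply: st_ext => u w huw; by rewrite Psi0.
rewrite iterS IH (@Uact_st _ _ symS deg4); apply: st_ext => u w huw.
by rewrite sumS -stepPsi.
Qed.

Lemma half_neq1 : (2^-1 : algC) != 1.
Proof. by rewrite invr_eq1 (eqr_nat algC 2 1). Qed.

Lemma half_norm : `|(2^-1 : algC)| = 2^-1.
Proof. by rewrite ger0_norm // invr_ge0 ler0n. Qed.

Lemma PST_at x t : ~~ odd t -> odd (t./2) -> A *+ t = 0 -> (1 <= t)%N ->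
  PST (dstar_e S x) (dstar_e S (x + L)) t.
Proof.
move=> ho hs hA ht; split.
  have H : x - (x - a) \in S by rewrite subK aS.
  move/ffunP/(_ (@mkarc _ _ _ _ H)).
  rewrite !(@dstar_st _ _ deg4) !ffunE /= eqxx xL mulr1 mulr0 => /eqP.
  by rewrite invr_eq0 pnatr_eq0.
split; first by [].
exists 1; split; first by rewrite normr1.
rewrite iterPsi (@dstar_st _ _ deg4); apply/ffunP => e; rewrite !ffunE mul1r.
by apply: PsiFinal => //; exact: (valP e).
Qed.

Lemma PST_nec x t : PST (dstar_e S x) (dstar_e S (x + L)) t -> ~~ odd t /\ A *+ t = 0.
Proof.
case=> _ [ht [g [hg heq]]].
have := distinct => /andP[/andP[/andP[/andP[/andP[d1 d2] d3] d4] d5] d6].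
rewrite iterPsi (@dstar_st _ _ deg4) in heq.
have H : (x + L) - (x + L - a) \in S by rewrite subK aS.
move/ffunP/(_ (@mkarc _ _ _ _ H)): heq; rewrite !ffunE /= eqxx mulr1.
have eL : (x + L) - x = L by rewrite addrAC subrr add0r.
have e1 : (x + L - a == x) = false.
  rewrite -addrA -hb -{2}(addr0 x) (inj_eq (addrI x)).
  by apply/negbTE/negP => /eqP h0; move: d6; rewrite h0 oppr0 eqxx.
have e2 : (x + L - a == x + L) = false.
  rewrite -{2}(addr0 (x + L)) (inj_eq (addrI _)) oppr_eq0.
  by apply/negbTE/negP => /eqP h0; move: d1; rewrite h0 oppr0 eqxx.
rewrite /Psi /Gm /Dm /Fm /Em subK eL (mulr2n (l%:R : Z)) L2 eqxx An [x + L == x]eq_sym xL e1 e2 eqxx /=.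
rewrite -signr_odd.
move=> h; have hg2 := congr1 (fun v => v * 2) h; rewrite /= divfK ?pnatr_eq0 // in hg2.
rewrite -{}hg2 {h} in hg.
move: hg; case: (odd t); case: (odd t./2); case hP: (0 == A *+ t) => /=.
all: try by move=> _; split => //; apply/eqP; rewrite eq_sym hP.
all: first [ rewrite (_ : _ * 2 = 0); last by field
           | rewrite (_ : _ * 2 = 2^-1); last by field
           | rewrite (_ : _ * 2 = - 2^-1); last by field ].
all: rewrite ?normrN ?normr0 ?half_norm => /eqP; rewrite ?(negbTE half_neq1) ?(eq_sym 0) ?oner_eq0 //.
Qed.


Lemma conn_div t : circ_connected S -> A *+ t = 0 -> (l %| t)%N.
Proof.
move=> hC hA.
have Al : A *+ l = 0 by rewrite -mulrnA mul2l.
have reach : forall (p : seq Z) (z : Z), (exists k, z *+ 2 = A *+ k) ->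
    path (fun u v : Z => v - u \in S) z p -> exists k, (last z p) *+ 2 = A *+ k.
  elim=> [|c p IH] z hz //= /andP [hzc hp]; apply: IH hp.
  case: hz => k hk.
  have -> : c = z + (c - z) by rewrite addrC subrK.
  rewrite mulrnDl hk.
  case: (dirS _ hzc) => ->.
    by exists k.+1; rewrite [RHS]mulrSr.
  exists (k + (l - 1))%N; rewrite mulrnDr; congr (_ + _).
  apply/eqP; rewrite eq_sym -addr_eq0 -(mulrSr (a *+ 2) (l - 1)) subn1 prednK ?Al //; lia.
have [p hp hlast] := connectP (hC 0 1).
have h0 : exists k, (0 : Z) *+ 2 = A *+ k by exists 0%N; rewrite mul0rn.
have [k hk] := reach p 0 h0 hp.
rewrite -hlast in hk.
have h2 : ((2 * t)%:R : Z) = 0 by rewrite mulrnA hk -mulrnA (mulnC k t) mulrnA hA mul0rn.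
have := congr1 (@nat_of_ord _) h2; rewrite val_Zp_nat ?p_gt1 //= => hm.
have : (2 * l %| 2 * t)%N by rewrite /dvdn hm.
by rewrite dvdn_pmul2l.
Qed.

End Spec.

Theorem lemma8p1 (l : nat) (a b : 'Z_(2 * l)) :
  (2 <= l)%N ->
  #|conn_set a b| = 4%N ->
  a + b = l%:R ->
  (l %% 4 != 0)%N ->
  ((l %% 4 = 2)%N ->
     forall x : 'Z_(2 * l),
       PST (dstar_e (conn_set a b) x) (dstar_e (conn_set a b) (x + l%:R)) l) /\
  (odd l ->
     forall x : 'Z_(2 * l),
       PST (dstar_e (conn_set a b) x) (dstar_e (conn_set a b) (x + l%:R)) (2 * l)) /\
  (circ_connected (conn_set a b) ->
     ((l %% 4 = 2)%N ->
        forall (x : 'Z_(2 * l)) (tau : nat),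
          PST (dstar_e (conn_set a b) x) (dstar_e (conn_set a b) (x + l%:R)) tau ->
          (l <= tau)%N) /\
     (odd l ->
        forall (x : 'Z_(2 * l)) (tau : nat),
          PST (dstar_e (conn_set a b) x) (dstar_e (conn_set a b) (x + l%:R)) tau ->
          (2 * l <= tau)%N)).
Proof.
move=> hl hc hab h4.
split.
  move=> hm x.
  have hl4 := divn_eq l 4; rewrite hm in hl4.
  have hq : l = ((l %/ 4).*2.+1).*2 by rewrite -!addnn; lia.
  apply: PST_at => //.
  - by rewrite hq odd_double.
  - by rewrite hq doubleK /= odd_double.
  - by rewrite -mulrnA (@mul2l _ a b hl hc).
  - lia.
split.
  move=> ho x.
  apply: PST_at => //.
  - by rewrite oddM.
  - by rewrite mul2n doubleK.
  - by rewrite (@mul2l _ a b hl hc).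
  - lia.
move=> hC; split.
  move=> hm x t hP.
  have [ho hA] := PST_nec _ _ _ hl hc hab _ _ hP.
  have hd := conn_div _ _ _ hl hc hab _ hC hA.
  case: hP => _ [ht _].
  exact: dvdn_leq.
move=> hodd x t hP.
have [ho hA] := PST_nec _ _ _ hl hc hab _ _ hP.
have hd := conn_div _ _ _ hl hc hab _ hC hA.
case: hP => _ [ht _].
case/dvdnP: hd => m hm.
have hm2 : ~~ odd m by move: ho; rewrite hm oddM hodd andbT.
have := odd_double_half m; rewrite (negbTE hm2) /= -addnn => hmm.
move: (m./2) hmm => j hmm.
rewrite hm -hmm in ht *.
case: j {hmm} ht => [|j] ht; first by rewrite addn0 mul0n in ht.
rewrite leq_mul2r; apply/orP; right; lia.
Qed.
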